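(* Let $M>0$, $\beta^*>0$, and let $g$ be the log-normal density $g(t)=\frac{1}{t\sigma\sqrt{2\pi}}\exp\!\big(-\frac{(\ln t-\mu)^2}{2\sigma^2}\big)$ for $t>0$, $g(t)=0$ for $t\le0$ ($\mu\in\mathbb{R}$, $\sigma>0$). Let $I$ be the unique $C^1$ solution on $[0,\infty)$ of \[ I'(t)=\beta^*(M-I(t))\Big(I(t)-\int_0^t g(t-s)I(s)\,ds\Big),\qquad I(0)=I_0\in[0,M]. \] Then: (1) if $I_0>0$ then $I(t)>0$ for all $t$, and if $I_0=0$ then $I\equiv0$; (2) if $I_0<M$ then $I(t)<M$ for all $t$, and if $I_0=M$ then $I\equiv M$. *)

(* Defs.v *)
From Stdlib Require Import Reals.
From Coquelicot Require Import Coquelicot.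
Open Scope R_scope.

Definition lognormal (mu sigma : R) (t : R) : R :=
  if Rle_dec t 0 then 0
  else / (t * sigma * sqrt (2 * PI)) * exp (- (ln t - mu) ^ 2 / (2 * sigma ^ 2)).

Definition rhs (beta M : R) (g I : R -> R) (t : R) : R :=
  beta * (M - I t) * (I t - RInt (fun s => g (t - s) * I s) 0 t).

Definition is_C1_solution (beta M : R) (g I : R -> R) : Prop :=
  (forall t, 0 < t -> is_derive I t (rhs beta M g I t)) /\
  filterlim (fun h => (I h - I 0) / h) (at_right 0) (locally (rhs beta M g I 0)) /\
  (forall t, 0 < t -> continuous (rhs beta M g I) t) /\
  filterlim (rhs beta M g I) (at_right 0) (locally (rhs beta M g I 0)).

(* Main.v *)
Require Import Defs.
From Stdlib Require Import Reals Lra Classical.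
From Coquelicot Require Import Coquelicot.
Open Scope R_scope.

Lemma exd_cont (f : R -> R) x : ex_derive f x -> continuous f x.
Proof. intros H. exact (ex_derive_continuous (K:=R_AbsRing) (V:=R_NormedModule) f x H). Qed.

Lemma exRI_cont (f : R -> R) a b : (forall z, Rmin a b <= z <= Rmax a b -> continuous f z) -> ex_RInt f a b.
Proof. intros H. exact (ex_RInt_continuous (V:=R_CompleteNormedModule) f a b H). Qed.

Definition gh (t : R) : R := exp (- (t ^ 2)).

Lemma gh_cont (x : R) : continuous gh x.
Proof. apply exd_cont. unfold gh. auto_derive. auto. Qed.

Lemma gh_exRInt a b : ex_RInt gh a b.
Proof. apply exRI_cont. intros; apply gh_cont. Qed.

Definition gk (u t : R) : R := exp (- (u ^ 2 * (1 + t ^ 2))) / (1 + t ^ 2).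

Lemma gk_derive u v : is_derive (fun z => gk z v) u (-2 * u * exp (- (u ^ 2 * (1 + v ^ 2)))).
Proof.
  unfold gk. auto_derive.
  - pose proof (Rle_0_sqr v); unfold Rsqr in *; lra.
  - assert (0 < 1 + v*(v*1)) by (pose proof (Rle_0_sqr v); unfold Rsqr in *; lra).
    replace (- (u ^ 2 * (1 + v ^ 2))) with (- (u * (u * 1) * (1 + v * (v * 1)))) by ring.
    field. lra.
Qed.

Lemma gk_Derive u v : Derive (fun z => gk z v) u = -2 * u * exp (- (u ^ 2 * (1 + v ^ 2))).
Proof. apply is_derive_unique, gk_derive. Qed.

Lemma gk_cont u t : continuous (gk u) t.
Proof. apply exd_cont. unfold gk. auto_derive. pose proof (Rle_0_sqr t); unfold Rsqr in *; lra. Qed.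

Ltac Rring := match goal with |- ?a = ?b => change (@eq R a b) end; ring.
Definition gK (x : R) : R := RInt (fun t => gk x t) 0 1.

Lemma gK_derive0 x : is_derive gK x (RInt (fun t => Derive (fun u => gk u t) x) 0 1).
Proof.
  unfold gK.
  
  apply (is_derive_RInt_param gk 0 1 x).
  -  apply filter_forall. intros y t _. eexists. apply gk_derive.
  - intros t _. 
    eapply continuity_2d_pt_ext. intros; symmetry; apply gk_Derive.
    apply continuity_2d_pt_mult.
    apply continuity_2d_pt_mult. apply continuity_2d_pt_const. apply continuity_2d_pt_id1.
    apply continuity_1d_2d_pt_comp.
    apply derivable_continuous_pt, derivable_exp.
    apply continuity_2d_pt_opp.
    apply continuity_2d_pt_mult.
    apply continuity_2d_pt_mult. apply continuity_2d_pt_id1.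
    apply continuity_2d_pt_mult. apply continuity_2d_pt_id1. apply continuity_2d_pt_const.
    apply continuity_2d_pt_plus. apply continuity_2d_pt_const.
    apply continuity_2d_pt_mult. apply continuity_2d_pt_id2.
    apply continuity_2d_pt_mult. apply continuity_2d_pt_id2. apply continuity_2d_pt_const.
  -  apply filter_forall. intros y. apply exRI_cont. intros; apply gk_cont.
Qed.

Lemma RInt_scal_R (f : R -> R) a b c : ex_RInt f a b -> RInt (fun t => c * f t) a b = c * RInt f a b.
Proof. intros H. exact (RInt_scal (V:=R_CompleteNormedModule) f a b c H). Qed.

Lemma RInt_lin_R (f : R -> R) u v a b : ex_RInt f (u*a+v) (u*b+v) -> RInt (fun y => u * f (u*y+v)) a b = RInt f (u*a+v) (u*b+v).
Proof. intros H. exact (RInt_comp_lin (V:=R_CompleteNormedModule) f u v a b H). Qed.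

Lemma ex_RInt_scal_R (f : R -> R) a b c : ex_RInt f a b -> ex_RInt (fun t => c * f t) a b.
Proof. intros H. exact (ex_RInt_scal (V:=R_NormedModule) f a b c H). Qed.

Lemma gK_val x : RInt (fun t => Derive (fun u => gk u t) x) 0 1 = -2 * exp (- (x ^ 2)) * RInt gh 0 x.
Proof.
  rewrite (RInt_ext _ (fun t => (-2 * exp (- (x ^ 2))) * (x * gh (x * t + 0)))).
  2:{ intros t _. rewrite gk_Derive. unfold gh.
      replace (- (x ^ 2 * (1 + t ^ 2))) with (- (x^2) + - ((x * t + 0) ^ 2)) by ring.
      rewrite exp_plus. match goal with |- ?a = ?b => change (@eq R a b) end; ring. }
  rewrite RInt_scal_R.
  rewrite RInt_lin_R.
  replace (x * 0 + 0) with 0 by ring. replace (x * 1 + 0) with x by ring. reflexivity.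
  apply gh_exRInt.
  apply exRI_cont. intros z _. apply (continuous_comp (fun t => x * t + 0) (fun y => x * gh y)).
  apply exd_cont. auto_derive. auto. apply exd_cont. unfold gh. auto_derive. auto.
Qed.

Lemma gK_derive x : is_derive gK x (-2 * exp (- (x ^ 2)) * RInt gh 0 x).
Proof. rewrite <- gK_val. apply gK_derive0. Qed.

Lemma gK0 : gK 0 = PI / 4.
Proof.
  unfold gK.
  rewrite (RInt_ext _ (fun t => / (1 + t ^ 2))).
  2:{ intros t _. unfold gk. replace (- (0 ^ 2 * (1 + t ^ 2))) with 0 by ring. rewrite exp_0. unfold Rdiv. Rring. }
  apply is_RInt_unique.
  replace (PI / 4) with (minus (atan 1) (atan 0)).
  apply (is_RInt_derive (V:=R_CompleteNormedModule) atan (fun t => / (1 + t ^ 2))).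
  - intros x _. apply is_derive_Reals. apply derivable_pt_lim_atan.
  - intros x _. apply exd_cont. auto_derive. pose proof (pow2_ge_0 x). lra.
  - rewrite atan_1, atan_0. unfold minus, plus, opp; simpl. ring.
Qed.

Lemma gh_RInt_derive x : is_derive (RInt gh 0) x (gh x).
Proof.
  apply (is_derive_RInt (V:=R_NormedModule) gh (RInt gh 0) 0 x).
  - apply filter_forall. intros b. apply (RInt_correct (V:=R_CompleteNormedModule)). apply gh_exRInt.
  - apply gh_cont.
Qed.

Definition gF x := RInt gh 0 x * RInt gh 0 x + gK x.

Lemma gF_derive x : is_derive gF x 0.
Proof.
  assert (H : is_derive gF x (plus (plus (mult (gh x) (RInt gh 0 x)) (mult (RInt gh 0 x) (gh x))) (-2 * exp (- (x ^ 2)) * RInt gh 0 x))).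
  { unfold gF.
    apply (is_derive_plus (K:=R_AbsRing) (V:=R_NormedModule)).
    apply (is_derive_mult (K:=R_AbsRing)). apply gh_RInt_derive. apply gh_RInt_derive.
    intros; apply Rmult_comm.
    apply gK_derive. }
  replace (plus (plus (mult (gh x) (RInt gh 0 x)) (mult (RInt gh 0 x) (gh x))) (-2 * exp (- (x ^ 2)) * RInt gh 0 x)) with 0 in H.
  exact H.
  unfold plus, mult, gh; simpl. set (r := RInt _ 0 x). replace (x * (x * 1)) with (x ^ 2) by (simpl; ring). set (e := exp _). Rring.
Qed.

Lemma gF_const x : gF x = PI / 4.
Proof.
  assert (H : gF x - gF 0 = 0 * (x - 0)).
  { destruct (MVT_gen gF 0 x (fun _ => 0)) as [c [_ Hc]].
    - intros; apply gF_derive.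
    - intros. apply continuity_pt_filterlim. apply exd_cont. eexists. apply gF_derive.
    - exact Hc. }
  unfold gF at 2 in H. rewrite RInt_point, gK0 in H. unfold zero in H; simpl in H. lra.
Qed.

Lemma gK_ge0 x : 0 <= gK x.
Proof.
  unfold gK. apply RInt_ge_0. lra. apply exRI_cont. intros; apply gk_cont.
  intros t _. unfold gk. apply Rlt_le, Rdiv_lt_0_compat. apply exp_pos.
  pose proof (pow2_ge_0 t). lra.
Qed.

Lemma gh_half x : Rabs (RInt gh 0 x) <= sqrt PI / 2.
Proof.
  assert (H : RInt gh 0 x * RInt gh 0 x <= PI / 4).
  { pose proof (gF_const x). pose proof (gK_ge0 x). unfold gF in *. lra. }
  rewrite <- sqrt_Rsqr_abs. unfold Rsqr.
  replace (sqrt PI / 2) with (sqrt (PI / 4)).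
  apply sqrt_le_1_alt. exact H.
  rewrite sqrt_div_alt. replace 4 with (2 * 2) by ring. rewrite sqrt_square. reflexivity. lra. lra.
Qed.

Lemma gh_bound a b : RInt gh a b <= sqrt PI.
Proof.
  rewrite <- (RInt_Chasles (V:=R_CompleteNormedModule) gh a 0 b).
  2,3: apply gh_exRInt.
  change (plus (RInt gh a 0) (RInt gh 0 b)) with (RInt gh a 0 + RInt gh 0 b).
  rewrite <- (opp_RInt_swap (V:=R_CompleteNormedModule)). 2: apply gh_exRInt.
  change (opp (RInt gh 0 a)) with (- RInt gh 0 a).
  pose proof (gh_half a). pose proof (gh_half b).
  apply Rabs_le_between in H. apply Rabs_le_between in H0. lra.
Qed.

Definition lnC (sigma : R) := / (sigma * sqrt (2 * PI)).

Lemma sqrt2PI_pos : 0 < sqrt (2 * PI).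
Proof. apply sqrt_lt_R0. pose proof PI_RGT_0. lra. Qed.

Lemma lnC_pos sigma : 0 < sigma -> 0 < lnC sigma.
Proof. intros. unfold lnC. apply Rinv_0_lt_compat. pose proof sqrt2PI_pos. nra. Qed.

Lemma logn_pos_eq mu sigma t : 0 < t ->
  lognormal mu sigma t = / (t * sigma * sqrt (2 * PI)) * exp (- (ln t - mu) ^ 2 / (2 * sigma ^ 2)).
Proof. intros. unfold lognormal. destruct (Rle_dec t 0); [lra|reflexivity]. Qed.

Lemma logn_npos mu sigma t : t <= 0 -> lognormal mu sigma t = 0.
Proof. intros. unfold lognormal. destruct (Rle_dec t 0); [reflexivity|lra]. Qed.

Lemma logn_gt0 mu sigma t : 0 < sigma -> 0 < t -> 0 < lognormal mu sigma t.
Proof.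
  intros hs ht. rewrite logn_pos_eq by lra. apply Rmult_lt_0_compat. 2: apply exp_pos.
  apply Rinv_0_lt_compat. pose proof sqrt2PI_pos. apply Rmult_lt_0_compat; [nra|lra].
Qed.

Lemma logn_ge0 mu sigma t : 0 < sigma -> 0 <= lognormal mu sigma t.
Proof.
  intros hs. destruct (Rle_dec t 0). rewrite logn_npos; lra.
  apply Rlt_le, logn_gt0; lra.
Qed.

Lemma core_ineq mu sigma L : 0 < sigma -> L < - (2 * Rabs mu + 16 * sigma ^ 2 + 1) ->
  - (L - mu) ^ 2 / (2 * sigma ^ 2) <= 2 * L.
Proof.
  intros hs hL.
  set (a := - L).
  assert (ha : 2 * Rabs mu + 16 * sigma ^ 2 + 1 < a) by (unfold a; lra).
  assert (hs2 : 0 < sigma ^ 2) by (apply pow_lt; lra).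
  assert (hm : - Rabs mu <= mu) by (pose proof (Rle_abs (-mu)) as q; rewrite Rabs_Ropp in q; lra).
  pose proof (Rabs_pos mu).
  assert (h1 : a / 2 <= a + mu) by lra.
  assert (h2 : (a/2) * (a/2) <= (a + mu) * (a + mu)) by (apply Rmult_le_compat; lra).
  assert (h3 : a * (4 * sigma ^ 2) <= (a/2) * (a/2)).
  { replace ((a/2)*(a/2)) with (a * (a / 4)) by field. apply Rmult_le_compat_l; lra. }
  replace ((L - mu) ^ 2) with ((a + mu) * (a + mu)) by (unfold a; ring).
  replace (2 * L) with (- (a * (4 * sigma ^ 2)) / (2 * sigma ^ 2)) by (unfold a; field; lra).
  unfold Rdiv. apply Rmult_le_compat_r. left; apply Rinv_0_lt_compat; lra. lra.
Qed.

Lemma logn_small mu sigma : 0 < sigma -> exists d, 0 < d /\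
  forall t, 0 < t < d -> lognormal mu sigma t <= lnC sigma * t.
Proof.
  intros hs. exists (exp (- (2 * Rabs mu + 16 * sigma ^ 2 + 1))). split. apply exp_pos.
  intros t [ht htd].
  rewrite logn_pos_eq by lra.
  assert (hL : ln t < - (2 * Rabs mu + 16 * sigma ^ 2 + 1)).
  { rewrite <- (ln_exp (- _)). apply ln_increasing; lra. }
  pose proof (core_ineq mu sigma (ln t) hs hL) as hc.
  assert (he : exp (- (ln t - mu) ^ 2 / (2 * sigma ^ 2)) <= t * t).
  { replace (t * t) with (exp (2 * ln t)). 
    destruct hc as [hc|hc]. left; apply exp_increasing; exact hc. rewrite hc; right; reflexivity.
    replace (2 * ln t) with (ln t + ln t) by ring. rewrite exp_plus, exp_ln by lra. reflexivity. }
  unfold lnC. pose proof sqrt2PI_pos.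
  replace (/ (sigma * sqrt (2 * PI)) * t) with (/ (t * sigma * sqrt (2 * PI)) * (t * t)) by (field; split; lra).
  apply Rmult_le_compat_l. left. apply Rinv_0_lt_compat. apply Rmult_lt_0_compat; [nra|lra]. exact he.
Qed.

Lemma cpt_intro (f : R -> R) x :
  (forall eps, 0 < eps -> exists d, 0 < d /\ forall y, Rabs (y - x) < d -> Rabs (f y - f x) < eps) ->
  continuity_pt f x.
Proof.
  intros H eps heps. destruct (H eps heps) as [d [hd Hd]]. exists d. split. lra.
  intros y [_ hy]. simpl in *. unfold R_dist in *. apply Hd. exact hy.
Qed.

Lemma cpt_elim (f : R -> R) x : continuity_pt f x ->
  forall eps, 0 < eps -> exists d, 0 < d /\ forall y, Rabs (y - x) < d -> Rabs (f y - f x) < eps.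
Proof.
  intros H eps heps. destruct (H eps heps) as [d [hd Hd]]. exists d. split. lra.
  intros y hy. destruct (Req_dec y x) as [->|hne].
  rewrite Rminus_diag, Rabs_R0. lra.
  apply (Hd y). split. split. exact I. auto. exact hy.
Qed.

Lemma loc_intro (x : R) (P : R -> Prop) d : 0 < d -> (forall y, Rabs (y - x) < d -> P y) -> locally x P.
Proof. intros hd H. exists (mkposreal d hd). intros y hy. apply H. exact hy. Qed.

Lemma cont_cpt (f : R -> R) x : continuous f x <-> continuity_pt f x.
Proof. split; intros H; apply continuity_pt_filterlim; exact H. Qed.

Lemma logn_cont mu sigma t : 0 < sigma -> continuity_pt (lognormal mu sigma) t.
Proof.
  intros hs.
  destruct (Rtotal_order t 0) as [hneg|[h0|hpos]].
  - apply cpt_intro. intros eps heps. exists (- t). split. lra. intros y hy.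
    rewrite !logn_npos. rewrite Rminus_diag, Rabs_R0. lra. lra.
    apply Rabs_lt_between in hy. lra.
  - subst t. apply cpt_intro. intros eps heps.
    destruct (logn_small mu sigma hs) as [d [hd Hd]].
    pose proof (lnC_pos sigma hs).
    exists (Rmin d (eps / lnC sigma)). split. apply Rmin_glb_lt. lra. apply Rdiv_lt_0_compat; lra.
    intros y hy. rewrite (logn_npos mu sigma 0) by lra. rewrite Rminus_0_r in hy; rewrite Rminus_0_r.
    destruct (Rle_dec y 0). rewrite logn_npos, Rabs_R0 by lra. lra.
    assert (0 < y) by lra. rewrite Rabs_pos_eq by (apply logn_ge0; lra).
    rewrite Rabs_pos_eq in hy by lra.
    apply Rle_lt_trans with (lnC sigma * y). apply Hd. split. lra.
    apply Rlt_le_trans with (1 := hy). apply Rmin_l.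
    apply Rlt_le_trans with (lnC sigma * (eps / lnC sigma)).
    apply Rmult_lt_compat_l. lra. apply Rlt_le_trans with (1 := hy). apply Rmin_r.
    right. field. lra.
  - apply cont_cpt.
    apply (continuous_ext_loc (T:=R_UniformSpace) (U:=R_UniformSpace) (lognormal mu sigma) (fun y => / (y * sigma * sqrt (2 * PI)) * exp (- (ln y - mu) ^ 2 / (2 * sigma ^ 2))) t).
    + apply (loc_intro _ _ t). lra. intros y hy. apply Rabs_lt_between in hy.
      symmetry. apply logn_pos_eq. lra.
    + apply exd_cont. auto_derive. pose proof sqrt2PI_pos. repeat split; try lra.
      apply Rgt_not_eq. apply Rmult_lt_0_compat; [nra|lra].
Qed.

Lemma exp_mono_le x y : x <= y -> exp x <= exp y.
Proof. intros H. destruct (Rle_lt_or_eq_dec x y H) as [h|h]. left; apply exp_increasing; exact h. subst; lra. Qed.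

Lemma logn_bound mu sigma : 0 < sigma -> exists Gb, 0 <= Gb /\ forall x, Rabs (lognormal mu sigma x) <= Gb.
Proof.
  intros hs.
  destruct (continuity_ab_maj (lognormal mu sigma) 0 1) as [Mx [HM _]]. lra.
  intros; apply logn_cont; exact hs.
  pose proof (lnC_pos sigma hs).
  exists (Rmax (lnC sigma) (lognormal mu sigma Mx)). split.
  apply Rle_trans with (lnC sigma). lra. apply Rmax_l.
  intros x. rewrite Rabs_pos_eq by (apply logn_ge0; lra).
  destruct (Rle_dec x 0). rewrite logn_npos by lra. apply Rle_trans with (lnC sigma). lra. apply Rmax_l.
  destruct (Rle_dec x 1).
  apply Rle_trans with (lognormal mu sigma Mx). apply HM; lra. apply Rmax_r.
  apply Rle_trans with (lnC sigma). 2: apply Rmax_l.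
  rewrite logn_pos_eq by lra. unfold lnC. pose proof sqrt2PI_pos.
  apply Rle_trans with (/ (x * sigma * sqrt (2 * PI)) * 1).
  apply Rmult_le_compat_l. left; apply Rinv_0_lt_compat. apply Rmult_lt_0_compat; [nra|lra].
  rewrite <- exp_0. apply exp_mono_le.
  assert (0 < 2 * sigma ^ 2) by (pose proof (pow_lt sigma 2 hs); lra).
  pose proof (pow2_ge_0 (ln x - mu)).
  assert (0 <= (ln x - mu) ^ 2 / (2 * sigma ^ 2)) by (apply Rdiv_le_0_compat; lra).
  unfold Rdiv in *. rewrite Ropp_mult_distr_l_reverse. lra.
  rewrite Rmult_1_r. assert (hq : 0 < sigma * sqrt (2 * PI)) by nra.
  replace (x * sigma * sqrt (2 * PI)) with (x * (sigma * sqrt (2 * PI))) by ring.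
  apply Rinv_le_contravar. exact hq.
  pattern (sigma * sqrt (2 * PI)) at 1; rewrite <- (Rmult_1_l (sigma * sqrt (2 * PI))).
  apply Rmult_le_compat_r; lra.
Qed.

Lemma logn_subst mu sigma y : 0 < sigma ->
  sigma * sqrt 2 * exp (mu + sigma * sqrt 2 * y) * lognormal mu sigma (exp (mu + sigma * sqrt 2 * y))
  = / sqrt PI * gh y.
Proof.
  intros hs. rewrite logn_pos_eq by apply exp_pos. rewrite ln_exp.
  unfold gh.
  replace (- (mu + sigma * sqrt 2 * y - mu) ^ 2 / (2 * sigma ^ 2)) with (- y ^ 2).
  2:{ replace ((mu + sigma * sqrt 2 * y - mu) ^ 2) with (sigma ^ 2 * (sqrt 2 * sqrt 2) * y ^ 2) by ring.
      rewrite sqrt_sqrt by lra. field. lra. }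
  rewrite sqrt_mult by (pose proof PI_RGT_0; lra).
  pose proof (exp_pos (mu + sigma * sqrt 2 * y)).
  assert (0 < sqrt 2) by (apply sqrt_lt_R0; lra).
  assert (0 < sqrt PI) by (apply sqrt_lt_R0; apply PI_RGT_0).
  field. repeat split; lra.
Qed.

Lemma logn_cdf_ab mu sigma a b : 0 < sigma -> 0 < a -> 0 < b -> RInt (lognormal mu sigma) a b <= 1.
Proof.
  intros hs ha hb.
  assert (h2 : 0 < sqrt 2) by (apply sqrt_lt_R0; lra).
  assert (hP : 0 < sqrt PI) by (apply sqrt_lt_R0; apply PI_RGT_0).
  set (phi := fun y => exp (mu + sigma * sqrt 2 * y)).
  set (dphi := fun y => sigma * sqrt 2 * exp (mu + sigma * sqrt 2 * y)).
  set (va := (ln a - mu) / (sigma * sqrt 2)).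
  set (vb := (ln b - mu) / (sigma * sqrt 2)).
  assert (Ea : phi va = a). { unfold phi, va. replace (mu + sigma * sqrt 2 * ((ln a - mu) / (sigma * sqrt 2))) with (ln a) by (field; lra). apply exp_ln; lra. }
  assert (Eb : phi vb = b). { unfold phi, vb. replace (mu + sigma * sqrt 2 * ((ln b - mu) / (sigma * sqrt 2))) with (ln b) by (field; lra). apply exp_ln; lra. }
  rewrite <- Ea, <- Eb.
  rewrite <- (RInt_comp (V:=R_CompleteNormedModule) (lognormal mu sigma) phi dphi va vb).
  - rewrite (RInt_ext _ (fun y => / sqrt PI * gh y)).
    2:{ intros y _. change (scal (dphi y) (lognormal mu sigma (phi y))) with (dphi y * lognormal mu sigma (phi y)).
        unfold dphi, phi. apply logn_subst. exact hs. }
    rewrite RInt_scal_R by apply gh_exRInt.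
    pose proof (gh_bound va vb).
    apply Rle_trans with (/ sqrt PI * sqrt PI).
    apply Rmult_le_compat_l. left; apply Rinv_0_lt_compat; lra. exact H.
    right. field. lra.
  - intros x _. apply cont_cpt. apply logn_cont. exact hs.
  - intros x _. split.
    + unfold phi, dphi. auto_derive. auto. ring.
    + unfold dphi. apply exd_cont. auto_derive. auto.
Qed.

Lemma logn_exRInt mu sigma a b : 0 < sigma -> ex_RInt (lognormal mu sigma) a b.
Proof. intros hs. apply exRI_cont. intros; apply cont_cpt, logn_cont, hs. Qed.

Lemma RInt_Chasles_R (f : R -> R) a b c : ex_RInt f a b -> ex_RInt f b c -> RInt f a b + RInt f b c = RInt f a c.
Proof. intros. exact (RInt_Chasles (V:=R_CompleteNormedModule) f a b c H H0). Qed.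

Lemma logn_cdf mu sigma t : 0 < sigma -> 0 < t -> RInt (lognormal mu sigma) 0 t < 1.
Proof.
  intros hs ht.
  set (g := lognormal mu sigma).
  assert (hgi : forall a b, ex_RInt g a b) by (intros; apply logn_exRInt; exact hs).
  assert (hd : 0 < RInt g t (t + 1)).
  { apply RInt_gt_0. lra. intros; apply logn_gt0; lra. intros; apply cont_cpt, logn_cont, hs. }
  set (dl := RInt g t (t + 1)) in *.
  destruct (logn_small mu sigma hs) as [d [hd0 Hd]].
  pose proof (lnC_pos sigma hs) as hC.
  set (e := Rmin (Rmin (t / 2) (d / 2)) (Rmin 1 (dl / (2 * lnC sigma + 2)))).
  assert (he0 : 0 < e).
  { unfold e. repeat apply Rmin_glb_lt; try lra. apply Rdiv_lt_0_compat; lra. }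
  assert (het : e < t) by (unfold e; pose proof (Rmin_l (Rmin (t/2) (d/2)) (Rmin 1 (dl / (2 * lnC sigma + 2)))); pose proof (Rmin_l (t/2) (d/2)); lra).
  assert (hed : e < d) by (unfold e; pose proof (Rmin_l (Rmin (t/2) (d/2)) (Rmin 1 (dl / (2 * lnC sigma + 2)))); pose proof (Rmin_r (t/2) (d/2)); lra).
  assert (he1 : e <= 1) by (unfold e; pose proof (Rmin_r (Rmin (t/2) (d/2)) (Rmin 1 (dl / (2 * lnC sigma + 2)))); pose proof (Rmin_l 1 (dl / (2 * lnC sigma + 2))); lra).
  assert (hedl : e <= dl / (2 * lnC sigma + 2)) by (unfold e; pose proof (Rmin_r (Rmin (t/2) (d/2)) (Rmin 1 (dl / (2 * lnC sigma + 2)))); pose proof (Rmin_r 1 (dl / (2 * lnC sigma + 2))); lra).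
  assert (h1 : RInt g e (t + 1) <= 1) by (apply logn_cdf_ab; lra).
  rewrite <- (RInt_Chasles_R g e t (t+1)) in h1 by apply hgi.
  rewrite <- (RInt_Chasles_R g 0 e t) by apply hgi.
  assert (h2 : Rabs (RInt g 0 e) <= (e - 0) * (lnC sigma * e)).
  { apply abs_RInt_le_const. lra. apply hgi. intros s hs'.
    unfold g. rewrite Rabs_pos_eq by (apply logn_ge0; lra).
    destruct (Rle_dec s 0). rewrite logn_npos by lra. nra.
    apply Rle_trans with (lnC sigma * s). apply Hd. lra. apply Rmult_le_compat_l; lra. }
  apply Rabs_le_between in h2.
  assert (h3 : (e - 0) * (lnC sigma * e) <= dl / 2).
  { apply Rle_trans with (lnC sigma * e). 
    replace ((e - 0) * (lnC sigma * e)) with (e * (lnC sigma * e)) by ring.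
    pattern (lnC sigma * e) at 2; rewrite <- (Rmult_1_l (lnC sigma * e)).
    apply Rmult_le_compat_r. nra. lra.
    apply Rle_trans with (lnC sigma * (dl / (2 * lnC sigma + 2))).
    apply Rmult_le_compat_l; lra.
    unfold Rdiv. rewrite <- Rmult_assoc.
    apply Rle_trans with ((2 * lnC sigma + 2) * / (2 * lnC sigma + 2) * dl * / 2).
    2:{ rewrite Rinv_r by lra. lra. }
    replace (lnC sigma * dl * / (2 * lnC sigma + 2)) with (lnC sigma * / (2 * lnC sigma + 2) * dl) by ring.
    replace ((2 * lnC sigma + 2) * / (2 * lnC sigma + 2) * dl * / 2) with ((lnC sigma + 1) * / (2 * lnC sigma + 2) * dl) by (field; lra).
    apply Rmult_le_compat_r. lra. apply Rmult_le_compat_r. left; apply Rinv_0_lt_compat; lra. lra. }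
  unfold dl in *. lra.
Qed.

Lemma cont_ind (P : R -> Prop) (T : R) : 0 <= T -> P 0 ->
  (forall t, 0 < t <= T -> (forall s, 0 <= s < t -> P s) -> P t) ->
  (forall t, 0 <= t < T -> (forall s, 0 <= s <= t -> P s) ->
     exists d, 0 < d /\ forall s, t < s < t + d -> s <= T -> P s) ->
  forall t, 0 <= t <= T -> P t.
Proof.
  intros hT h0 hl hr.
  set (E := fun x => 0 <= x <= T /\ forall s, 0 <= s <= x -> P s).
  assert (hb : bound E) by (exists T; intros x [hx _]; lra).
  assert (he : exists x, E x).
  { exists 0. split. lra. intros s hs. replace s with 0 by lra. exact h0. }
  destruct (completeness E hb he) as [c [hub hlub]].
  assert (hc0 : 0 <= c). { apply hub. destruct he as [x hx]. unfold E. split. lra. intros s hs. replace s with 0 by lra. exact h0. }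
  assert (hcT : c <= T). { apply hlub. intros x [hx _]. lra. }
  assert (hbelow : forall s, 0 <= s < c -> P s).
  { intros s hs. destruct (Rle_lt_dec c s) as [hcs|hsc]. lra.
    destruct (classic (exists x, E x /\ s < x)) as [[x [[_ Hx] hsx]]|hno].
    apply Hx. lra.
    exfalso. assert (c <= s). apply hlub. intros x hx. destruct (Rle_lt_dec x s). exact r.
    exfalso. apply hno. exists x. split; auto. lra. }
  assert (hPc : forall s, 0 <= s <= c -> P s).
  { intros s hs. destruct (Rle_lt_or_eq_dec s c) as [h|h]. lra. apply hbelow; lra.
    subst s. destruct (Rle_lt_or_eq_dec 0 c hc0) as [h|h]. apply hl. lra. exact hbelow.
    rewrite <- h. exact h0. }
  assert (hcT' : c = T).
  { destruct (Rle_lt_or_eq_dec c T hcT) as [h|h]; [|exact h].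
    exfalso. destruct (hr c (conj hc0 h) hPc) as [d [hd Hd]].
    set (s' := Rmin (c + d / 2) T).
    assert (Es : E s').
    { split. split. unfold s'. apply Rmin_glb. lra. lra. apply Rmin_r.
      intros s hs. destruct (Rle_lt_dec s c) as [hsc|hcs]. apply hPc; lra.
      apply Hd. split. lra. apply Rle_lt_trans with s'. lra. unfold s'. pose proof (Rmin_l (c + d/2) T). lra.
      pose proof (Rmin_r (c + d/2) T). unfold s' in hs. lra. }
    assert (s' <= c) by (apply hub; exact Es).
    unfold s' in H. unfold Rmin in H. destruct (Rle_dec (c + d/2) T); lra. }
  intros t ht. apply hPc. lra.
Qed.

Lemma uniq0 (f df : R -> R) (T K : R) : 0 <= T -> 0 <= K ->
  (forall x, continuity_pt f x) -> f 0 = 0 ->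
  (forall c, 0 < c < T -> is_derive f c (df c)) ->
  (forall c m, 0 <= c < T -> (forall u, 0 <= u <= c -> Rabs (f u) <= m) -> Rabs (df c) <= K * m) ->
  forall t, 0 <= t <= T -> f t = 0.
Proof.
  intros hT hK hc hf0 hd hb.
  apply (cont_ind (fun t => f t = 0) T hT hf0).
  - intros t ht Hbel. destruct (Req_dec (f t) 0) as [h|h]. exact h. exfalso.
    destruct (cpt_elim f t (hc t) (Rabs (f t))) as [d [hd0 Hd]]. apply Rabs_pos_lt, h.
    set (s := Rmax 0 (t - d / 2)).
    assert (hs : 0 <= s < t). { unfold s, Rmax. destruct (Rle_dec 0 (t - d/2)); lra. }
    assert (hsd : Rabs (s - t) < d). { apply Rabs_def1; unfold s, Rmax; destruct (Rle_dec 0 (t - d/2)); lra. }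
    specialize (Hd s hsd). rewrite (Hbel s hs) in Hd. rewrite Rminus_0_l, Rabs_Ropp in Hd. lra.
  - intros t ht Hle.
    exists (Rmin (T - t) (/ (2 * K + 2))). split.
    apply Rmin_glb_lt. lra. apply Rinv_0_lt_compat. lra.
    intros s hs hsT.
    assert (hd1 : s - t <= / (2 * K + 2)) by (pose proof (Rmin_r (T - t) (/ (2 * K + 2))); lra).
    assert (hd2 : s < T \/ s = T) by lra.
    destruct (continuity_ab_maj (fun x => Rabs (f x)) t s) as [Mx [HM hMx]]. lra.
    { intros c _. apply (continuity_pt_comp f Rabs). apply hc. apply Rcontinuity_abs. }
    set (m := Rabs (f Mx)) in *.
    assert (hm : forall u, 0 <= u <= Mx -> Rabs (f u) <= m).
    { intros u hu. destruct (Rle_dec u t). rewrite (Hle u) by lra. rewrite Rabs_R0. apply Rabs_pos.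
      apply HM. lra. }
    destruct (MVT_gen f t Mx df) as [c [hcI hcE]].
    + intros x hx. rewrite Rmin_left in hx by lra. rewrite Rmax_right in hx by lra. apply hd. 
      pose proof (Rmin_l (T - t) (/ (2 * K + 2))). lra.
    + intros x _. apply hc.
    + rewrite Rmin_left in hcI by lra. rewrite Rmax_right in hcI by lra.
      assert (hcT : 0 <= c < T) by (pose proof (Rmin_l (T - t) (/ (2 * K + 2))); lra).
      assert (hdc : Rabs (df c) <= K * m) by (apply hb; [exact hcT| intros u hu; apply hm; lra]).
      rewrite (Hle t) in hcE by lra. rewrite Rminus_0_r in hcE.
      assert (hmm : m <= K * m * / (2 * K + 2)).
      { unfold m at 1. rewrite hcE. rewrite Rabs_mult. rewrite (Rabs_pos_eq (Mx - t)) by lra.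
        apply Rmult_le_compat. apply Rabs_pos. lra. exact hdc. lra. }
      assert (hm0 : 0 <= m) by apply Rabs_pos.
      assert (hm1 : m <= 0).
      { assert (hq : K * / (2 * K + 2) <= / 2).
        { replace (K * / (2 * K + 2)) with (/ 2 - / (2 * K + 2)) by (field; lra).
          pose proof (Rinv_0_lt_compat (2 * K + 2)). lra. }
        assert (K * m * / (2 * K + 2) <= / 2 * m).
        { replace (K * m * / (2 * K + 2)) with (K * / (2 * K + 2) * m) by ring.
          apply Rmult_le_compat_r; lra. }
        lra. }
      assert (Rabs (f s) <= m) by (apply HM; lra).
      apply Rabs_eq_0. pose proof (Rabs_pos (f s)). lra.
Qed.

Lemma der_Mminus (h : R -> R) c l M : is_derive h c l -> is_derive (fun s => M - h s) c (- l).
Proof.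
  intros H. 
  pose proof (is_derive_minus (K:=R_AbsRing) (V:=R_NormedModule) (fun _ => M) h c zero l (is_derive_const (K:=R_AbsRing) (V:=R_NormedModule) M c) H) as H2.
  replace (- l) with (minus (zero : R) l). exact H2.
  unfold minus, plus, opp, zero; simpl. ring.
Qed.

Lemma der_refl (h : R -> R) z c l : is_derive h (z - c) l -> is_derive (fun s => h (z - s)) c (- l).
Proof.
  intros H.
  assert (Hg : is_derive (fun s : R => z - s) c (-1)).
  { auto_derive. auto. ring. }
  pose proof (is_derive_comp (K:=R_AbsRing) (V:=R_NormedModule) h (fun s => z - s) c l (-1) H Hg) as H2.
  replace (- l) with (scal (-1) l). exact H2.
  unfold scal; simpl; unfold mult; simpl. ring.
Qed.

Lemma cpt_Mminus (h : R -> R) M x : continuity_pt h x -> continuity_pt (fun s => M - h s) x.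
Proof.
  intros H. apply cpt_intro. intros eps he. destruct (cpt_elim h x H eps he) as [d [hd Hd]].
  exists d. split. exact hd. intros y hy. specialize (Hd y hy).
  replace (M - h y - (M - h x)) with (- (h y - h x)) by ring. rewrite Rabs_Ropp. exact Hd.
Qed.

Lemma cpt_refl (h : R -> R) z x : continuity_pt h (z - x) -> continuity_pt (fun s => h (z - s)) x.
Proof.
  intros H. apply cpt_intro. intros eps he. destruct (cpt_elim h (z - x) H eps he) as [d [hd Hd]].
  exists d. split. exact hd. intros y hy. apply Hd.
  replace (z - y - (z - x)) with (- (y - x)) by ring. rewrite Rabs_Ropp. exact hy.
Qed.

Lemma at_right_elim (f : R -> R) l x : filterlim f (at_right x) (locally l) ->
  forall eps, 0 < eps -> exists d, 0 < d /\ forall y, x < y < x + d -> Rabs (f y - l) < eps.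
Proof.
  intros H eps he.
  destruct (H _ (locally_ball l (mkposreal eps he))) as [d Hd].
  exists d. split. apply cond_pos. intros y hy. apply (Hd y).
  change (Rabs (y - x) < d). rewrite Rabs_pos_eq; lra. lra.
Qed.

Definition It (I : R -> R) (s : R) := I (Rmax 0 s).

Lemma It_eq I s : 0 <= s -> It I s = I s.
Proof. intros. unfold It. rewrite Rmax_right by lra. reflexivity. Qed.

Definition Hyp M beta mu sigma I := 0 < M /\ 0 < beta /\ 0 < sigma /\ 0 <= I 0 <= M /\
  is_C1_solution beta M (lognormal mu sigma) I.

Lemma It_derive M beta mu sigma I : Hyp M beta mu sigma I ->
  forall c, 0 < c -> is_derive (It I) c (rhs beta M (lognormal mu sigma) I c).
Proof.
  intros [_ [_ [_ [_ [H1 _]]]]] c hc.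
  apply (is_derive_ext_loc (K:=R_AbsRing) (V:=R_NormedModule) I). 2: apply H1, hc.
  apply (loc_intro c _ c). exact hc. intros y hy. apply Rabs_lt_between in hy.
  symmetry. apply It_eq. lra.
Qed.

Lemma It_cont M beta mu sigma I : Hyp M beta mu sigma I -> forall x, continuity_pt (It I) x.
Proof.
  intros HH x. pose proof HH as [_ [_ [_ [_ [H1 [H2 _]]]]]].
  destruct (Rtotal_order x 0) as [hneg|[h0|hpos]].
  - apply cpt_intro. intros eps he. exists (- x). split. lra. intros y hy.
    apply Rabs_lt_between in hy. unfold It. rewrite !Rmax_left by lra. rewrite Rminus_diag, Rabs_R0. lra.
  - subst x. apply cpt_intro. intros eps he.
    destruct (at_right_elim _ _ 0 H2 1) as [d [hd Hd]]. lra.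
    set (r := rhs beta M (lognormal mu sigma) I 0) in *.
    pose proof (Rabs_pos r).
    exists (Rmin d (eps / (Rabs r + 1))). split. apply Rmin_glb_lt. lra. apply Rdiv_lt_0_compat; lra.
    intros y hy. rewrite Rminus_0_r in hy.
    unfold It. rewrite (Rmax_left 0 0) by lra.
    destruct (Rle_dec y 0). rewrite Rmax_left by lra. rewrite Rminus_diag, Rabs_R0. lra.
    rewrite Rmax_right by lra. rewrite Rabs_pos_eq in hy by lra.
    assert (hy1 : y < d) by (pose proof (Rmin_l d (eps / (Rabs r + 1))); lra).
    assert (hy2 : y < eps / (Rabs r + 1)) by (pose proof (Rmin_r d (eps / (Rabs r + 1))); lra).
    specialize (Hd y). rewrite Rplus_0_l in Hd. specialize (Hd (conj (Rnot_le_lt _ _ n) hy1)).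
    try rewrite Rminus_0_r in Hd.
    assert (Eq : I y - I 0 = y * ((I y - I 0) / y)) by (field; lra).
    rewrite Eq, Rabs_mult, Rabs_pos_eq by lra.
    assert (Rabs ((I y - I 0) / y) <= Rabs r + 1).
    { pose proof (Rabs_triang_inv ((I y - I 0) / y) r). lra. }
    apply Rle_lt_trans with (y * (Rabs r + 1)). apply Rmult_le_compat_l; lra.
    apply Rlt_le_trans with (eps / (Rabs r + 1) * (Rabs r + 1)). apply Rmult_lt_compat_r; lra.
    right. field. lra.
  - apply cpt_intro. intros eps he.
    assert (hI : continuity_pt I x).
    { apply cont_cpt. apply exd_cont. eexists. apply H1. lra. }
    destruct (cpt_elim I x hI eps he) as [d [hd Hd]].
    exists (Rmin d x). split. apply Rmin_glb_lt; lra. intros y hy.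
    assert (Rabs (y - x) < d) by (pose proof (Rmin_l d x); lra).
    assert (Rabs (y - x) < x) by (pose proof (Rmin_r d x); lra).
    apply Rabs_lt_between in H0.
    rewrite !It_eq by lra. apply Hd. assumption.
Qed.

Definition conv mu sigma (I : R -> R) t := RInt (fun s => lognormal mu sigma (t - s) * I s) 0 t.

Lemma rhs_eq beta M mu sigma I t :
  rhs beta M (lognormal mu sigma) I t = beta * (M - I t) * (I t - conv mu sigma I t).
Proof. reflexivity. Qed.

Lemma conv_It mu sigma I t : 0 <= t ->
  conv mu sigma I t = RInt (fun s => lognormal mu sigma (t - s) * It I s) 0 t.
Proof.
  intros ht. apply RInt_ext. intros x hx. rewrite Rmin_left, Rmax_right in hx by lra.
  rewrite It_eq by lra. reflexivity.
Qed.

Lemma gshift_cont mu sigma t s : 0 < sigma -> continuous (fun s => lognormal mu sigma (t - s)) s.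
Proof. intros hs. apply cont_cpt. apply cpt_refl. apply logn_cont. exact hs. Qed.

Lemma conv_ex M beta mu sigma I : Hyp M beta mu sigma I -> forall t,
  ex_RInt (fun s => lognormal mu sigma (t - s) * It I s) 0 t.
Proof.
  intros HH t. pose proof HH as [_ [_ [hs _]]]. apply exRI_cont. intros z _.
  apply (continuous_mult (K:=R_AbsRing) (fun s => lognormal mu sigma (t - s)) (It I)).
  apply gshift_cont, hs. apply cont_cpt. apply (It_cont M beta mu sigma I HH).
Qed.

Lemma conv_bound M beta mu sigma I Gb : Hyp M beta mu sigma I ->
  (forall x, Rabs (lognormal mu sigma x) <= Gb) ->
  forall t m, 0 <= t -> (forall u, 0 <= u <= t -> Rabs (I u) <= m) ->
  Rabs (conv mu sigma I t) <= t * (Gb * m).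
Proof.
  intros HH HG t m ht Hm. rewrite conv_It by lra.
  replace t with (t - 0) at 2 by ring.
  apply abs_RInt_le_const. exact ht. apply (conv_ex M beta mu sigma I HH).
  intros s hs. rewrite Rabs_mult. rewrite It_eq by lra.
  apply Rmult_le_compat. apply Rabs_pos. apply Rabs_pos. apply HG. apply Hm. exact hs.
Qed.

Lemma I_bound M beta mu sigma I : Hyp M beta mu sigma I -> forall T, 0 <= T ->
  exists Ib, 0 <= Ib /\ forall u, 0 <= u <= T -> Rabs (I u) <= Ib.
Proof.
  intros HH T hT.
  destruct (continuity_ab_maj (fun x => Rabs (It I x)) 0 T hT) as [Mx [HM _]].
  { intros c _. apply (continuity_pt_comp (It I) Rabs). apply (It_cont M beta mu sigma I HH). apply Rcontinuity_abs. }
  exists (Rabs (It I Mx)). split. apply Rabs_pos.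
  intros u hu. rewrite <- (It_eq I u) by lra. apply HM. exact hu.
Qed.

Lemma A_bound M beta mu sigma I : Hyp M beta mu sigma I -> forall T, 0 <= T ->
  exists Ab, 0 <= Ab /\ forall c, 0 <= c <= T -> Rabs (I c - conv mu sigma I c) <= Ab.
Proof.
  intros HH T hT. pose proof HH as [_ [_ [hs _]]].
  destruct (I_bound M beta mu sigma I HH T hT) as [Ib [hIb HIb]].
  destruct (logn_bound mu sigma hs) as [Gb [hGb HGb]].
  exists (Ib + T * (Gb * Ib)). split. apply Rplus_le_le_0_compat. lra.
  apply Rmult_le_pos. lra. apply Rmult_le_pos; lra.
  intros c hc.
  apply Rle_trans with (Rabs (I c) + Rabs (conv mu sigma I c)).
  unfold Rminus. rewrite <- (Rabs_Ropp (conv mu sigma I c)). apply Rabs_triang.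
  apply Rplus_le_compat. apply HIb. exact hc.
  apply Rle_trans with (c * (Gb * Ib)).
  apply (conv_bound M beta mu sigma I Gb HH HGb). lra. intros u hu. apply HIb. lra.
  apply Rmult_le_compat_r. apply Rmult_le_pos; lra. lra.
Qed.

Lemma rhs_bound_J M beta mu sigma I T Ab : Hyp M beta mu sigma I ->
  (forall c, 0 <= c <= T -> Rabs (I c - conv mu sigma I c) <= Ab) ->
  forall c m, 0 <= c <= T -> Rabs (M - I c) <= m ->
  Rabs (rhs beta M (lognormal mu sigma) I c) <= beta * Ab * m.
Proof.
  intros HH HA c m hc hm. pose proof HH as [_ [hb _]].
  rewrite rhs_eq. rewrite !Rabs_mult. rewrite (Rabs_pos_eq beta) by lra.
  replace (beta * Ab * m) with (beta * m * Ab) by ring.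
  apply Rmult_le_compat. apply Rmult_le_pos. lra. apply Rabs_pos. apply Rabs_pos.
  apply Rmult_le_compat_l; lra. apply HA; exact hc.
Qed.

Lemma part2_eq M beta mu sigma I : Hyp M beta mu sigma I -> I 0 = M -> forall t, 0 <= t -> I t = M.
Proof.
  intros HH h0 t ht. pose proof HH as [hM [hb [hs _]]].
  destruct (A_bound M beta mu sigma I HH t ht) as [Ab [hAb HA]].
  assert (E : (fun s => M - It I s) t = 0).
  { apply (uniq0 (fun s => M - It I s) (fun c => - rhs beta M (lognormal mu sigma) I c) t (beta * Ab)).
    - exact ht.
    - apply Rmult_le_pos; lra.
    - intros x. apply cpt_Mminus. apply (It_cont M beta mu sigma I HH).
    - rewrite It_eq by lra. lra.
    - intros c hc. apply der_Mminus. apply (It_derive M beta mu sigma I HH). lra.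
    - intros c m hc Hm. rewrite Rabs_Ropp.
      apply (rhs_bound_J M beta mu sigma I t Ab HH HA). lra.
      specialize (Hm c). rewrite It_eq in Hm by lra. apply Hm. lra.
    - lra. }
  simpl in E. rewrite It_eq in E by lra. lra.
Qed.

Lemma part2_lt M beta mu sigma I : Hyp M beta mu sigma I -> I 0 < M -> forall t, 0 <= t -> I t < M.
Proof.
  intros HH h0 t ht. pose proof HH as [hM [hb [hs _]]].
  destruct (Rlt_le_dec (I t) M) as [h|h]. exact h. exfalso.
  assert (hz : exists z, 0 < z <= t /\ It I z = M).
  { destruct (Rle_lt_or_eq_dec M (I t) h) as [hlt|heq].
    - destruct (IVT (fun s => It I s - M) 0 t) as [z [hz hzE]].
      + intros x. apply continuity_pt_minus. apply (It_cont M beta mu sigma I HH). apply continuity_pt_const. intros a b; reflexivity.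
      + destruct (Rle_lt_or_eq_dec 0 t ht) as [h'|h']. exact h'. subst t. lra.
      + rewrite It_eq by lra. lra.
      + rewrite It_eq by lra. lra.
      + exists z. split. split. 2: lra. destruct (Rle_lt_or_eq_dec 0 z) as [h'|h']. lra. exact h'.
        subst z. rewrite It_eq in hzE by lra. lra. lra.
    - exists t. split. split. 2: lra. destruct (Rle_lt_or_eq_dec 0 t ht) as [h'|h']. exact h'. subst t. lra.
      rewrite It_eq by lra. lra. }
  destruct hz as [z [hz hzE]].
  destruct (A_bound M beta mu sigma I HH z (Rlt_le _ _ (proj1 hz))) as [Ab [hAb HA]].
  assert (E : (fun s => M - It I (z - s)) z = 0).
  { apply (uniq0 (fun s => M - It I (z - s)) (fun c => rhs beta M (lognormal mu sigma) I (z - c)) z (beta * Ab)).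
    - lra.
    - apply Rmult_le_pos; lra.
    - intros x. apply cpt_Mminus. apply cpt_refl. apply (It_cont M beta mu sigma I HH).
    - simpl. rewrite Rminus_0_r. lra.
    - intros c hc. 
      replace (rhs beta M (lognormal mu sigma) I (z - c)) with (- - rhs beta M (lognormal mu sigma) I (z - c)) by ring.
      apply der_Mminus. apply (der_refl (It I)). apply (It_derive M beta mu sigma I HH). lra.
    - intros c m hc Hm.
      apply (rhs_bound_J M beta mu sigma I z Ab HH HA). lra.
      specialize (Hm c). rewrite It_eq in Hm by lra. apply Hm. lra.
    - lra. }
  simpl in E. rewrite Rminus_diag in E. rewrite It_eq in E by lra. lra.
Qed.

Lemma part1_eq M beta mu sigma I : Hyp M beta mu sigma I -> I 0 = 0 -> forall t, 0 <= t -> I t = 0.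
Proof.
  intros HH h0 t ht. pose proof HH as [hM [hb [hs _]]].
  destruct (I_bound M beta mu sigma I HH t ht) as [Ib [hIb HIb]].
  destruct (logn_bound mu sigma hs) as [Gb [hGb HGb]].
  assert (E : It I t = 0).
  { apply (uniq0 (It I) (rhs beta M (lognormal mu sigma) I) t (beta * (M + Ib) * (1 + t * Gb))).
    - exact ht.
    - apply Rmult_le_pos. apply Rmult_le_pos; lra. apply Rplus_le_le_0_compat. lra. apply Rmult_le_pos; lra.
    - apply (It_cont M beta mu sigma I HH).
    - rewrite It_eq by lra. exact h0.
    - intros c hc. apply (It_derive M beta mu sigma I HH). lra.
    - intros c m hc Hm.
      assert (Hm' : forall u, 0 <= u <= c -> Rabs (I u) <= m).
      { intros u hu. rewrite <- (It_eq I u) by lra. apply Hm. exact hu. }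
      assert (hIc : Rabs (I c) <= m) by (apply Hm'; lra).
      assert (hm0 : 0 <= m) by (pose proof (Rabs_pos (I c)); lra).
      assert (hcv := conv_bound M beta mu sigma I Gb HH HGb c m (proj1 hc) Hm').
      rewrite rhs_eq. rewrite !Rabs_mult. rewrite (Rabs_pos_eq beta) by lra.
      replace (beta * (M + Ib) * (1 + t * Gb) * m) with (beta * (M + Ib) * (m + t * (Gb * m))) by ring.
      apply Rmult_le_compat. apply Rmult_le_pos. lra. apply Rabs_pos. apply Rabs_pos.
      apply Rmult_le_compat_l. lra.
      apply Rle_trans with (Rabs M + Rabs (I c)).
      unfold Rminus. rewrite <- (Rabs_Ropp (I c)). apply Rabs_triang.
      rewrite Rabs_pos_eq by lra. apply Rplus_le_compat_l. apply HIb. lra.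
      apply Rle_trans with (Rabs (I c) + Rabs (conv mu sigma I c)).
      unfold Rminus. rewrite <- (Rabs_Ropp (conv mu sigma I c)). apply Rabs_triang.
      apply Rplus_le_compat. exact hIc.
      apply Rle_trans with (1 := hcv). apply Rmult_le_compat_r. apply Rmult_le_pos; lra. lra.
    - lra. }
  rewrite It_eq in E by lra. exact E.
Qed.

Lemma mono M beta mu sigma I : Hyp M beta mu sigma I -> forall s1 s2, 0 <= s1 <= s2 ->
  (forall c, s1 < c < s2 -> 0 <= rhs beta M (lognormal mu sigma) I c) -> I s1 <= I s2.
Proof.
  intros HH s1 s2 hs Hc.
  destruct (MVT_gen (It I) s1 s2 (fun c => Rmax 0 (rhs beta M (lognormal mu sigma) I c))) as [c [_ hcE]].
  - intros x hx. rewrite Rmin_left in hx by lra. rewrite Rmax_right in hx by lra.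
    rewrite Rmax_right by (apply Hc; lra). apply (It_derive M beta mu sigma I HH). lra.
  - intros x _. apply (It_cont M beta mu sigma I HH).
  - rewrite !It_eq in hcE by lra.
    assert (0 <= Rmax 0 (rhs beta M (lognormal mu sigma) I c) * (s2 - s1)).
    { apply Rmult_le_pos. apply Rmax_l. lra. }
    lra.
Qed.

Lemma RInt_refl_g mu sigma t : 0 < sigma ->
  RInt (fun s => lognormal mu sigma (t - s)) 0 t = RInt (lognormal mu sigma) 0 t.
Proof.
  intros hs. set (g := lognormal mu sigma).
  assert (hgi : forall a b, ex_RInt g a b) by (intros; apply logn_exRInt; exact hs).
  rewrite (RInt_ext _ (fun s => (-1) * ((-1) * g ((-1) * s + t)))).
  2:{ intros x _. replace ((-1) * x + t) with (t - x) by ring. match goal with |- ?a = ?b => change (@eq R a b) end; ring. }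
  rewrite RInt_scal_R.
  rewrite RInt_lin_R by apply hgi.
  replace (-1 * 0 + t) with t by ring. replace (-1 * t + t) with 0 by ring.
  rewrite <- (opp_RInt_swap (V:=R_CompleteNormedModule)) by apply hgi.
  change (opp (RInt g 0 t)) with (- RInt g 0 t). match goal with |- ?a = ?b => change (@eq R a b) end; ring.
  apply exRI_cont. intros z _. apply (continuous_comp (fun s => -1 * s + t) (fun y => -1 * g y)).
  apply exd_cont. auto_derive. auto.
  apply (continuous_mult (K:=R_AbsRing) (fun _ => -1) g). apply continuous_const.
  apply cont_cpt, logn_cont, hs.
Qed.

Lemma conv_le M beta mu sigma I t : Hyp M beta mu sigma I -> 0 <= t ->
  (forall s, 0 < s < t -> I s <= I t) ->
  conv mu sigma I t <= I t * RInt (lognormal mu sigma) 0 t.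
Proof.
  intros HH ht Hs. pose proof HH as [_ [_ [hs _]]].
  rewrite conv_It by exact ht.
  rewrite <- RInt_refl_g by exact hs.
  assert (hex : ex_RInt (fun s => lognormal mu sigma (t - s)) 0 t).
  { apply exRI_cont. intros; apply gshift_cont, hs. }
  rewrite <- RInt_scal_R by exact hex.
  apply RInt_le. exact ht. apply (conv_ex M beta mu sigma I HH).
  apply ex_RInt_scal_R. exact hex.
  intros x hx. rewrite It_eq by lra. rewrite Rmult_comm.
  apply Rmult_le_compat_r. apply logn_ge0, hs. apply Hs. exact hx.
Qed.

Lemma part1_pos M beta mu sigma I : Hyp M beta mu sigma I -> 0 < I 0 -> forall t, 0 <= t -> 0 < I t.
Proof.
  intros HH h0 t ht. pose proof HH as [hM [hb [hs [hI0 [H1 [H2 [H3 H4]]]]]]].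
  destruct (Rle_lt_or_eq_dec (I 0) M (proj2 hI0)) as [hlt|heq].
  2:{ rewrite (part2_eq M beta mu sigma I HH heq t ht). exact hM. }
  assert (hJ := part2_lt M beta mu sigma I HH hlt).
  set (A := fun s => I s - conv mu sigma I s).
  assert (hrhs : forall s, 0 <= s -> rhs beta M (lognormal mu sigma) I s = beta * (M - I s) * A s).
  { intros. reflexivity. }
  assert (hApos : forall s, 0 <= s -> 0 < A s -> 0 < rhs beta M (lognormal mu sigma) I s).
  { intros s hs0 hA. rewrite hrhs by exact hs0. apply Rmult_lt_0_compat. apply Rmult_lt_0_compat. lra.
    specialize (hJ s hs0). lra. exact hA. }
  assert (hrA : forall s, 0 <= s -> 0 < rhs beta M (lognormal mu sigma) I s -> 0 < A s).
  { intros s hs0 hr. rewrite hrhs in hr by exact hs0. specialize (hJ s hs0).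
    destruct (Rlt_le_dec 0 (A s)) as [h|h]. exact h. exfalso.
    assert (beta * (M - I s) * A s <= 0). { apply Rmult_le_0_l. apply Rmult_le_pos; lra. exact h. }
    lra. }
  assert (hA : forall T, 0 <= T -> forall s, 0 <= s <= T -> 0 < A s).
  { intros T hT. apply (cont_ind (fun s => 0 < A s) T hT).
    - unfold A, conv. rewrite RInt_point. change (zero : R) with 0. lra.
    - intros s hs0 Hbel.
      assert (hm : forall s1, 0 <= s1 <= s -> I s1 <= I s).
      { intros s1 hs1. apply (mono M beta mu sigma I HH). exact hs1.
        intros c hc. left. apply hApos. lra. apply Hbel. lra. }
      assert (hIs : I 0 <= I s) by (apply hm; lra).
      pose proof (conv_le M beta mu sigma I s HH (Rlt_le _ _ (proj1 hs0))) as hc.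
      assert (hc' : conv mu sigma I s <= I s * RInt (lognormal mu sigma) 0 s).
      { apply hc. intros s1 hs1. apply hm. lra. }
      pose proof (logn_cdf mu sigma s hs (proj1 hs0)) as hG.
      unfold A.
      assert (I s * RInt (lognormal mu sigma) 0 s < I s * 1) by (apply Rmult_lt_compat_l; lra).
      lra.
    - intros s hs0 Hle.
      assert (hr0 : 0 < rhs beta M (lognormal mu sigma) I s) by (apply hApos; [lra| apply Hle; lra]).
      destruct (Rle_lt_or_eq_dec 0 s (proj1 hs0)) as [hpos|hzero].
      + destruct (cpt_elim _ s (proj1 (cont_cpt _ _) (H3 s hpos)) _ hr0) as [d [hd Hd]].
        exists d. split. exact hd. intros y hy _.
        apply hrA. lra. specialize (Hd y). 
        assert (Rabs (y - s) < d) by (rewrite Rabs_pos_eq; lra).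
        specialize (Hd H). apply Rabs_lt_between in Hd. lra.
      + subst s. destruct (at_right_elim _ _ 0 H4 _ hr0) as [d [hd Hd]].
        exists d. split. exact hd. intros y hy _.
        apply hrA. lra. specialize (Hd y hy). apply Rabs_lt_between in Hd. lra. }
  assert (hIt : I 0 <= I t).
  { apply (mono M beta mu sigma I HH). lra. intros c hc. left. apply hApos. lra.
    apply (hA t ht). lra. }
  lra.
Qed.

Theorem proposition3p5 (M beta mu sigma : R) (I : R -> R)
  (hM : 0 < M) (hbeta : 0 < beta) (hsigma : 0 < sigma)
  (hI0 : 0 <= I 0 <= M)
  (hsol : is_C1_solution beta M (lognormal mu sigma) I) :
  ((0 < I 0 -> forall t, 0 <= t -> 0 < I t) /\
   (I 0 = 0 -> forall t, 0 <= t -> I t = 0)) /\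
  ((I 0 < M -> forall t, 0 <= t -> I t < M) /\
   (I 0 = M -> forall t, 0 <= t -> I t = M)).
Proof.
  assert (HH : Hyp M beta mu sigma I) by exact (conj hM (conj hbeta (conj hsigma (conj hI0 hsol)))).
  split; split.
  - apply (part1_pos M beta mu sigma I HH).
  - apply (part1_eq M beta mu sigma I HH).
  - apply (part2_lt M beta mu sigma I HH).
  - apply (part2_eq M beta mu sigma I HH).
Qed.
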